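(* Let $\gamma\in\mathbb{R}$, $d>0$, and let $I:\mathbb{R}\to\mathbb{R}$ be a continuous $2\pi$-periodic function. Consider the system on the two-torus $(\mathbb{R}/2\pi\mathbb{Z})^2$ $$\dot\phi_1=\gamma-\sin\phi_1+d\,I(\phi_2),\qquad \dot\phi_2=\gamma-\sin\phi_2+d\,I(\phi_1).$$ Its equilibria are of two types: those on the diagonal $\phi_1=\phi_2$ (first type) and those off the diagonal (second type), the latter occurring in symmetric pairs $(a,b)$, $(b,a)$. If the system has an equilibrium of the second type, i.e. an equilibrium $(a,b)$ with $a\neq b$ (mod $2\pi$), then it also has an equilibrium of the first type, i.e. there exists $\xi$ with $\gamma-\sin\xi+d\,I(\xi)=0$. *)

(* Defs.v *)
From Stdlib Require Export Reals.
Open Scope R_scope.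

Definition field1 (gamma d : R) (I : R -> R) (p1 p2 : R) : R :=
  gamma - sin p1 + d * I p2.

(* (p1,p2) is an equilibrium of the system (angles represented by reals). *)
Definition is_equilibrium (gamma d : R) (I : R -> R) (p1 p2 : R) : Prop :=
  field1 gamma d I p1 p2 = 0 /\ field1 gamma d I p2 p1 = 0.

Definition eq_mod_2pi (a b : R) : Prop := exists k : Z, a - b = 2 * PI * IZR k.

(* Main.v *)
Require Import Defs.
From Stdlib Require Import Reals Lra.
Open Scope R_scope.

Lemma key (gamma d : R) (I : R -> R) (hI : continuity I) a b :
  a <= b -> field1 gamma d I a b = 0 -> field1 gamma d I b a = 0 ->
  exists xi, field1 gamma d I xi xi = 0.
Proof.
  intros hab h1 h2.
  pose (f := fun x => field1 gamma d I x x).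
  assert (hc : continuity f).
  { unfold f, field1.
    apply continuity_plus.
    - apply continuity_minus. apply continuity_const. intros u v; reflexivity.
      apply continuity_sin.
    - apply continuity_scal. exact hI. }
  assert (hp : f a * f b <= 0).
  { unfold f, field1 in *.
    replace (gamma - sin a + d * I a) with (sin b - sin a) by lra.
    replace (gamma - sin b + d * I b) with (sin a - sin b) by lra.
    replace ((sin b - sin a) * (sin a - sin b)) with (- ((sin b - sin a) * (sin b - sin a))) by ring.
    pose proof (Rle_0_sqr (sin b - sin a)). unfold Rsqr in *. lra. }
  destruct (IVT_cor f a b hc hab hp) as [z [_ hz]].
  exists z. exact hz.
Qed.

Theorem mainTheorem2 (gamma d : R) (I : R -> R)
  (hd : 0 < d) (hI : continuity I) (hper : forall x, I (x + 2 * PI) = I x) :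
  (exists a b, is_equilibrium gamma d I a b /\ ~ eq_mod_2pi a b) ->
  exists xi, is_equilibrium gamma d I xi xi.
Proof.
  intros [a [b [[h1 h2] _]]].
  destruct (Rle_dec a b) as [hab|hab].
  - destruct (key gamma d I hI a b hab h1 h2) as [xi hx].
    exists xi. split; exact hx.
  - destruct (key gamma d I hI b a ltac:(lra) h2 h1) as [xi hx].
    exists xi. split; exact hx.
Qed.
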